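(* Let $\alpha,\beta,\gamma,\delta\in\mathbb{R}$ with $\alpha+\delta\neq 0$ and $\alpha\gamma+\beta\delta=0$, and let $G_5$ be the connected, simply connected Lie group whose Lie algebra $\mathfrak{g}_5$ has a basis $\{e_1,e_2,e_3\}$ with $[e_1,e_2]=0$, $[e_1,e_3]=\alpha e_1+\beta e_2$, $[e_2,e_3]=\gamma e_1+\delta e_2$, equipped with the left-invariant Lorentzian metric $g$ for which $\{e_1,e_2,e_3\}$ is pseudo-orthonormal with $e_3$ timelike, and with the product structure $J$. Let $\lambda_0,c\in\mathbb{R}$. Then there exists a derivation $D$ of $\mathfrak{g}_5$ with $\widetilde{\mathrm{Ric}}^1=(s^1\lambda_0+c)\mathrm{Id}+D$ (i.e. $(G_5,g,J)$ is an algebraic Schouten soliton associated to the Kobayashi–Nomizu connection $\nabla^1$) if and only if $c=0$.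
   Context: Pseudo-orthonormal means $g(e_1,e_1)=g(e_2,e_2)=1$, $g(e_3,e_3)=-1$, $g(e_i,e_j)=0$ for $i\neq j$; left-invariant tensors are identified with their values on $\mathfrak{g}$. $\nabla$ is the Levi-Civita connection of $g$. The product structure $J$ is the left-invariant endomorphism with $Je_1=e_1$, $Je_2=e_2$, $Je_3=-e_3$. The canonical connection is $\nabla^0_XY=\nabla_XY-\frac12(\nabla_XJ)JY$, and the Kobayashi–Nomizu connection is $\nabla^1_XY=\nabla^0_XY-\frac14[(\nabla_YJ)JX-(\nabla_{JY}J)X]$. For $k=0,1$: $R^k(X,Y)Z=\nabla^k_X\nabla^k_YZ-\nabla^k_Y\nabla^k_XZ-\nabla^k_{[X,Y]}Z$; $\rho^k(X,Y)=-g(R^k(X,e_1)Y,e_1)-g(R^k(X,e_2)Y,e_2)+g(R^k(X,e_3)Y,e_3)$; $\widetilde\rho^k(X,Y)=\frac12(\rho^k(X,Y)+\rho^k(Y,X))$; $\widetilde{\mathrm{Ric}}^k$ is defined by $\widetilde\rho^k(X,Y)=g(\widetilde{\mathrm{Ric}}^k(X),Y)$; and $s^k=\widetilde\rho^k(e_1,e_1)+\widetilde\rho^k(e_2,e_2)-\widetilde\rho^k(e_3,e_3)$. A derivation of $\mathfrak{g}$ is a linear map $D$ with $D[X,Y]=[DX,Y]+[X,DY]$. $(G,g,J)$ is an algebraic Schouten soliton associated to $\nabla^k$ (with real constants $\lambda_0,c$) if $\widetilde{\mathrm{Ric}}^k=(s^k\lambda_0+c)\mathrm{Id}+D$ for some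 derivation $D$. *)

(* Defs.v *)
(* Left-invariant objects on G_5 are identified with their
   values on the Lie algebra g_5 = R^3 (row vectors 'rV[R]_3, coordinates in
   the basis e_1,e_2,e_3 = e 0, e 1, e 2). *)
From HB Require Import structures.
From mathcomp Require Import all_boot all_order all_algebra.
From mathcomp Require Import reals.
Set Implicit Arguments. Unset Strict Implicit. Unset Printing Implicit Defensive.
Import Order.TTheory GRing.Theory Num.Theory.
Local Open Scope ring_scope.

Section G5.
Variable R : realType.
Variables (al be ga de : R).

Definition vec := 'rV[R]_3.

Definition e (i : 'I_3) : vec := delta_mx 0 i.

Definition eps (i : 'I_3) : R := if val i == 2%N then -1 else 1.

Definition gm (u v : vec) : R := \sum_(i < 3) eps i * u 0 i * v 0 i.

Definition brb (i j : 'I_3) : vec :=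
  match (val i : nat), (val j : nat) with
  | 0%N, 2%N => al *: e 0 + be *: e 1
  | 2%N, 0%N => - (al *: e 0 + be *: e 1)
  | 1%N, 2%N => ga *: e 0 + de *: e 1
  | 2%N, 1%N => - (ga *: e 0 + de *: e 1)
  | _, _ => 0
  end.

Definition br (u v : vec) : vec :=
  \sum_(i < 3) \sum_(j < 3) (u 0 i * v 0 j) *: brb i j.

(* Levi-Civita connection on left-invariant fields (Koszul formula):
   2 g(nab X Y, Z) = g([X,Y],Z) - g([Y,Z],X) + g([Z,X],Y),
   solved in the pseudo-orthonormal basis. *)
Definition nab (X Y : vec) : vec :=
  \sum_(k < 3) ((eps k / 2) *
     (gm (br X Y) (e k) - gm (br Y (e k)) X + gm (br (e k) X) Y)) *: e k.

Definition Jm (X : vec) : vec := \row_(i < 3) (eps i * X 0 i).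

Definition nabJ (X Y : vec) : vec := nab X (Jm Y) - Jm (nab X Y).

Definition nab0 (X Y : vec) : vec := nab X Y - (1/2) *: nabJ X (Jm Y).

Definition nab1 (X Y : vec) : vec :=
  nab0 X Y - (1/4) *: (nabJ Y (Jm X) - nabJ (Jm Y) X).

Definition curv1 (X Y Z : vec) : vec :=
  nab1 X (nab1 Y Z) - nab1 Y (nab1 X Z) - nab1 (br X Y) Z.

Definition rho1 (X Y : vec) : R :=
  - gm (curv1 X (e 0) Y) (e 0) - gm (curv1 X (e 1) Y) (e 1)
  + gm (curv1 X (e 2) Y) (e 2).

Definition rhot1 (X Y : vec) : R := (rho1 X Y + rho1 Y X) / 2.

Definition Ric1 (X : vec) : vec :=
  \sum_(k < 3) (eps k * rhot1 X (e k)) *: e k.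

Definition s1 : R := rhot1 (e 0) (e 0) + rhot1 (e 1) (e 1) - rhot1 (e 2) (e 2).

(* derivations of g_5; a linear map is a matrix acting on row vectors *)
Definition is_derivation (D : 'M[R]_3) : Prop :=
  forall X Y : vec, br X Y *m D = br (X *m D) Y + br X (Y *m D).

Definition alg_schouten_soliton1 (lam0 c : R) : Prop :=
  exists D : 'M[R]_3, is_derivation D /\
    forall X : vec, Ric1 X = (s1 * lam0 + c) *: X + X *m D.

End G5.

(* Main.v *)
Require Import Defs.
From HB Require Import structures.
From mathcomp Require Import all_boot all_order all_algebra.
From mathcomp Require Import reals ring.
Import Order.TTheory GRing.Theory Num.Theory.
Local Open Scope ring_scope.
Set Implicit Arguments. Unset Strict Implicit.

Definition i0 : 'I_3 := @Ordinal 3 0 isT.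
Definition i1 : 'I_3 := @Ordinal 3 1 isT.
Definition i2 : 'I_3 := @Ordinal 3 2 isT.
Lemma sum3 (R : realType) (F : 'I_3 -> R) : \sum_(i < 3) F i = F i0 + F i1 + F i2.
Proof. rewrite !big_ord_recr big_ord0 /= add0r.
have -> : (widen_ord (leqnSn 2) (widen_ord (leqnSn 1) ord_max)) = i0 by apply/val_inj.
have -> : (widen_ord (leqnSn 2) ord_max) = i1 by apply/val_inj.
have -> : (@ord_max 2) = i2 by apply/val_inj.
done. Qed.
Lemma sum3v (R : realType) (F : 'I_3 -> vec R) : \sum_(i < 3) F i = F i0 + F i1 + F i2.
Proof. rewrite !big_ord_recr big_ord0 /= add0r.
have -> : (widen_ord (leqnSn 2) (widen_ord (leqnSn 1) ord_max)) = i0 by apply/val_inj.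
have -> : (widen_ord (leqnSn 2) ord_max) = i1 by apply/val_inj.
have -> : (@ord_max 2) = i2 by apply/val_inj.
done. Qed.
Lemma ord3P (k : 'I_3) : k = i0 \/ k = i1 \/ k = i2.
Proof. case: k => [[|[|[|n]]] Hk]; [left|right;left|right;right|by []]; exact/val_inj. Qed.

Section S.
Variables (R : realType) (al be ga de : R).
Local Notation e := (e R).
Lemma e00 : e i0 0 i0 = 1. Proof. by rewrite mxE. Qed.
Lemma e01 : e i0 0 i1 = 0. Proof. by rewrite mxE. Qed.
Lemma e02 : e i0 0 i2 = 0. Proof. by rewrite mxE. Qed.
Lemma e10 : e i1 0 i0 = 0. Proof. by rewrite mxE. Qed.
Lemma e11 : e i1 0 i1 = 1. Proof. by rewrite mxE. Qed.
Lemma e12 : e i1 0 i2 = 0. Proof. by rewrite mxE. Qed.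
Lemma e20 : e i2 0 i0 = 0. Proof. by rewrite mxE. Qed.
Lemma e21 : e i2 0 i1 = 0. Proof. by rewrite mxE. Qed.
Lemma e22 : e i2 0 i2 = 1. Proof. by rewrite mxE. Qed.
Lemma eps0 : eps R i0 = 1. Proof. by []. Qed.
Lemma eps1 : eps R i1 = 1. Proof. by []. Qed.
Lemma eps2 : eps R i2 = -1. Proof. by []. Qed.
Definition eL := (e00, e01, e02, e10, e11, e12, e20, e21, e22, eps0, eps1, eps2).

Lemma gmE (u v : vec R) : gm u v = u 0 i0 * v 0 i0 + u 0 i1 * v 0 i1 - u 0 i2 * v 0 i2.
Proof. rewrite /gm sum3 !eL; ring. Qed.

Local Notation br := (br al be ga de).
Ltac simp := rewrite ?(summxE, sum3, sum3v, mxE, eL, gmE) /=.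
Lemma br0 u v : br u v 0 i0 = (u 0 i0 * v 0 i2 - u 0 i2 * v 0 i0) * al + (u 0 i1 * v 0 i2 - u 0 i2 * v 0 i1) * ga.
Proof. rewrite /br /brb; simp. ring. Qed.
Lemma br1 u v : br u v 0 i1 = (u 0 i0 * v 0 i2 - u 0 i2 * v 0 i0) * be + (u 0 i1 * v 0 i2 - u 0 i2 * v 0 i1) * de.
Proof. rewrite /br /brb; simp. ring. Qed.
Lemma br2 u v : br u v 0 i2 = 0.
Proof. rewrite /br /brb; simp. ring. Qed.
Local Notation nab1 := (nab1 al be ga de).
Ltac simp2 := rewrite ?(summxE, sum3, sum3v, mxE, eL, gmE, br0, br1, br2) /=.
Local Notation nab := (nab al be ga de).
Local Notation nabJ := (nabJ al be ga de).
Local Notation nab0 := (nab0 al be ga de).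
Ltac simp3 := rewrite ?(summxE, sum3, sum3v, mxE, eL, gmE, br0, br1, br2).
Ltac fin := rewrite ?(mul0r, mulr0, mul1r, mulr1, add0r, addr0, subr0, sub0r, oppr0); by field.
Lemma nab_0 X Y : nab X Y 0 i0 = 2^-1 * (- ga * X 0 i2 * Y 0 i1 + ga * X 0 i1 * Y 0 i2 + be * X 0 i2 * Y 0 i1 + be * X 0 i1 * Y 0 i2) + al * X 0 i0 * Y 0 i2.
Proof. rewrite /nab; simp3. Time fin. Qed.
Lemma nab_1 X Y : nab X Y 0 i1 = 2^-1 * (ga * X 0 i2 * Y 0 i0 + ga * X 0 i0 * Y 0 i2 - be * X 0 i2 * Y 0 i0 + be * X 0 i0 * Y 0 i2) + de * X 0 i1 * Y 0 i2.
Proof. rewrite /nab; simp3. Time fin. Qed.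
Lemma nab_2 X Y : nab X Y 0 i2 = 2^-1 * (ga * X 0 i1 * Y 0 i0 + ga * X 0 i0 * Y 0 i1 + be * X 0 i1 * Y 0 i0 + be * X 0 i0 * Y 0 i1) + al * X 0 i0 * Y 0 i0 + de * X 0 i1 * Y 0 i1.
Proof. rewrite /nab; simp3. Time fin. Qed.
Definition nL := (nab_0, nab_1, nab_2).
Lemma nabJ_0 X Y : nabJ X Y 0 i0 = - ga * X 0 i1 * Y 0 i2 - be * X 0 i1 * Y 0 i2 - 2 * al * X 0 i0 * Y 0 i2.
Proof. rewrite /nabJ; rewrite ?(mxE, nL, eL). fin. Qed.
Lemma nabJ_1 X Y : nabJ X Y 0 i1 = - 2 * de * X 0 i1 * Y 0 i2 - ga * X 0 i0 * Y 0 i2 - be * X 0 i0 * Y 0 i2.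
Proof. rewrite /nabJ; rewrite ?(mxE, nL, eL). fin. Qed.
Lemma nabJ_2 X Y : nabJ X Y 0 i2 = 2 * de * X 0 i1 * Y 0 i1 + ga * X 0 i1 * Y 0 i0 + ga * X 0 i0 * Y 0 i1 + be * X 0 i1 * Y 0 i0 + be * X 0 i0 * Y 0 i1 + 2 * al * X 0 i0 * Y 0 i0.
Proof. rewrite /nabJ; rewrite ?(mxE, nL, eL). fin. Qed.
Definition jL := (nabJ_0, nabJ_1, nabJ_2).
Lemma nab0_0 X Y : nab0 X Y 0 i0 = 2^-1 * (be - ga) * X 0 i2 * Y 0 i1.
Proof. rewrite /nab0; rewrite ?(mxE, nL, jL, eL). fin. Qed.
Lemma nab0_1 X Y : nab0 X Y 0 i1 = 2^-1 * (ga - be) * X 0 i2 * Y 0 i0.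
Proof. rewrite /nab0; rewrite ?(mxE, nL, jL, eL). fin. Qed.
Lemma nab0_2 X Y : nab0 X Y 0 i2 = 0.
Proof. rewrite /nab0; rewrite ?(mxE, nL, jL, eL). fin. Qed.
Definition oL := (nab0_0, nab0_1, nab0_2).
Lemma n0 X Y : nab1 X Y 0 i0 = - X 0 i2 * (Y 0 i0 * al + Y 0 i1 * ga).
Proof. rewrite /nab1; rewrite ?(mxE, oL, jL, nL, eL). fin. Qed.
Lemma n1 X Y : nab1 X Y 0 i1 = - X 0 i2 * (Y 0 i0 * be + Y 0 i1 * de).
Proof. rewrite /nab1; rewrite ?(mxE, oL, jL, nL, eL). fin. Qed.
Lemma n2 X Y : nab1 X Y 0 i2 = 0.
Proof. rewrite /nab1; rewrite ?(mxE, oL, jL, nL, eL). fin. Qed.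
Definition mk (a b c : R) : vec R :=
  \row_(k < 3) (if val k == 0%N then a else if val k == 1%N then b else c).
Lemma mk0 a b c : mk a b c 0 i0 = a. Proof. by rewrite mxE. Qed.
Lemma mk1 a b c : mk a b c 0 i1 = b. Proof. by rewrite mxE. Qed.
Lemma mk2 a b c : mk a b c 0 i2 = c. Proof. by rewrite mxE. Qed.
Lemma brE u v : br u v = mk ((u 0 i0 * v 0 i2 - u 0 i2 * v 0 i0) * al + (u 0 i1 * v 0 i2 - u 0 i2 * v 0 i1) * ga)
  ((u 0 i0 * v 0 i2 - u 0 i2 * v 0 i0) * be + (u 0 i1 * v 0 i2 - u 0 i2 * v 0 i1) * de) 0.
Proof. apply/rowP => k; case: (ord3P k) => [|[|]] ->; [rewrite [LHS]br0 mk0|rewrite [LHS]br1 mk1|rewrite [LHS]br2 mk2] => //. Qed.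
Lemma nab1E X Y : nab1 X Y = mk (- X 0 i2 * (Y 0 i0 * al + Y 0 i1 * ga)) (- X 0 i2 * (Y 0 i0 * be + Y 0 i1 * de)) 0.
Proof. apply/rowP => k; case: (ord3P k) => [|[|]] ->; [rewrite [LHS]n0 mk0|rewrite [LHS]n1 mk1|rewrite [LHS]n2 mk2] => //. Qed.
Lemma curv0 X Y Z : curv1 al be ga de X Y Z = 0.
Proof. rewrite /curv1 brE !nab1E !mk0 !mk1 !mk2.
apply/rowP => k; case: (ord3P k) => [|[|]] ->; rewrite !mxE /=; ring. Qed.
Lemma gm0 (v : vec R) : gm (0 : vec R) v = 0.
Proof. by rewrite /gm big1 // => i _; rewrite mxE mulr0 mul0r. Qed.
Lemma rho0 X Y : rho1 al be ga de X Y = 0.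
Proof. by rewrite /rho1 !curv0 !gm0 oppr0 !addr0. Qed.
Lemma Ric0 X : Ric1 al be ga de X = 0.
Proof. rewrite /Ric1 big1 // => k _. by rewrite /rhot1 !rho0 addr0 mul0r mulr0 scale0r. Qed.
Lemma s0 : s1 al be ga de = 0.
Proof. by rewrite /s1 /rhot1 !rho0 ?(addr0, mul0r, subr0). Qed.
Lemma brZl a u v : br (a *: u) v = a *: br u v.
Proof. rewrite !brE; apply/rowP => k; case: (ord3P k) => [|[|]] ->; rewrite !mxE /=; ring. Qed.
Lemma brZr a u v : br u (a *: v) = a *: br u v.
Proof. rewrite !brE; apply/rowP => k; case: (ord3P k) => [|[|]] ->; rewrite !mxE /=; ring. Qed.
End S.

Theorem theorem4p11 (R : realType) (al be ga de : R)
  (h1 : al + de != 0) (h2 : al * ga + be * de = 0) (lam0 c : R) :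
  alg_schouten_soliton1 al be ga de lam0 c <-> c = 0.
Proof.
split.
- case=> D [hD hR].
  have hX (X : vec R) : X *m D = - c *: X.
    move: (hR X); rewrite Ric0 s0 mul0r add0r => /eqP.
    by rewrite eq_sym addrC addr_eq0 -scaleNr => /eqP.
  have k u v : c *: br al be ga de u v = 0.
    move: (hD u v); rewrite !hX brZl brZr => /eqP.
    rewrite -scalerDl -subr_eq0 -scalerBl => /eqP.
    by rewrite (_ : - c - (- c + - c) = c) //; ring.
  have ka : c * al = 0.
    have := congr1 (fun M : vec R => M 0 i0) (k (e R i0) (e R i2)).
    rewrite /= brE !mxE /= => H; rewrite -H; ring.
  have kd : c * de = 0.
    have := congr1 (fun M : vec R => M 0 i1) (k (e R i1) (e R i2)).
    rewrite /= brE !mxE /= => H; rewrite -H; ring.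
  have : c * (al + de) = 0 by rewrite mulrDr ka kd addr0.
  by move/eqP; rewrite mulf_eq0 (negPf h1) orbF => /eqP.
- move=> ->; exists 0; split.
  + by move=> X Y; rewrite !mulmx0 -(scale0r (e R i0)) brZl brZr !scale0r addr0.
  + by move=> X; rewrite Ric0 s0 mul0r addr0 scale0r mulmx0 addr0.
Qed.
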